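(* Let $n\ge2$, $a\in H_n\rtimes S_n$, $g\in C_{H_n}(a)$ and $i\in I(a)$. If $t_i(g)\neq0$, then $t_j(g)\neq0$ for all $j\in I(a)$ with $[j]_a\sim_a[i]_a$.
   Context: $\mathbb{N}=\{1,2,\dots\}$, $X_n=\{1,\dots,n\}\times\mathbb{N}$, permutations act on the right. $H_n$ is the group of bijections $g$ of $X_n$ with $z_i(g)\in\mathbb{N}$, $t_i(g)\in\mathbb{Z}$ such that $(i,m)g=(i,m+t_i(g))$ for all $m\ge z_i(g)$. $S_n$ acts by $(i,m)\sigma=(i\sigma,m)$; $H_n\rtimes S_n\le\mathrm{Sym}(X_n)$ is generated by $H_n$ and these; each $a$ is uniquely $\omega_a\sigma_a$ with $\omega_a\in H_n$, $\sigma_a\in S_n$, $t_i(a):=t_i(\omega_a)$. $C_{H_n}(a)=\{g\in H_n: ga=ag\}$. $[i]_a$ is the orbit of $i$ under $\langle\sigma_a\rangle$, $t_{[i]}(a)=\sum_{k\in[i]_a}t_k(a)$, $I(a)=\{i:t_{[i]}(a)\ne0\}$. For $i_1\in I(a)$, $m_1\in\mathbb{N}$: $X_{i,m}(a)=\{(i,m')\in X_n: m'\equiv m\bmod|t_{[i]}(a)|\}$, $X_{[i_1],m_1}(a)=\bigsqcup_{q=1}^{|[i_1]_a|}X_{i_q,m_q}(a)$ with $i_q=i_1\sigma_a^{q-1}$, $m_q=m_1+\sum_{d=1}^{q-1}t_{i_d}(a)$. Almost equal = finite symmetric difference. $\sim_a$ is the equivalence relation on $\{[k]_a:k\in I(a)\}$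 generated by $[i]_a\sim_a[j]_a$ whenever some $\langle a\rangle$-orbit is almost equal to $X_{[i],d}(a)\sqcup X_{[j],e}(a)$ for some $d,e\in\mathbb{N}$. *)

(* Defs.v *)
From mathcomp Require Import all_boot all_order all_algebra all_fingroup.
From Stdlib Require Import ClassicalEpsilon Relations.
Set Implicit Arguments. Unset Strict Implicit. Unset Printing Implicit Defensive.
Import GRing.Theory Num.Theory.
Local Open Scope ring_scope.
Local Open Scope int_scope.

(* Points of X_n.  The pair (i, k) with i : 'I_n, k : nat encodes the point
   (i+1, k+1) of X_n = {1..n} x N (N = {1,2,...}). *)
Definition pt (n : nat) := ('I_n * nat)%type.

Definition ray_transl n (f : pt n -> pt n) (i : 'I_n) (t : int) : Prop :=
  exists z : nat, forall m : nat, (z <= m)%N ->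
    (f (i, m)).1 = i /\ ((f (i, m)).2)%:Z = (m%:Z + t)%R.

Definition in_H n (f : pt n -> pt n) : Prop :=
  bijective f /\ forall i : 'I_n, exists t : int, ray_transl f i t.

(* t_i(f) (unique for f in H_n). *)
Definition transl n (f : pt n -> pt n) (i : 'I_n) : int :=
  epsilon (inhabits 0%R) (fun t => ray_transl f i t).

Definition sigma_act n (s : {perm 'I_n}) (x : pt n) : pt n := (s x.1, x.2).

(* The element a = omega_a sigma_a (right actions: first omega, then sigma). *)
Definition semi n (w : pt n -> pt n) (s : {perm 'I_n}) : pt n -> pt n :=
  fun x => sigma_act s (w x).

Local Open Scope ring_scope.

Definition tcl n (w : pt n -> pt n) (s : {perm 'I_n}) (i : 'I_n) : int :=
  \sum_(k in porbit s i) transl w k.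

Definition inI n w s (i : 'I_n) : Prop := tcl w s i != 0.

Definition Xcl n w s (i1 : 'I_n) (m1 : int) : pt n -> Prop :=
  fun x => exists2 q : nat, (q < #|porbit s i1|)%N &
    x.1 = (s ^+ q)%g i1 /\
    (((x.2).+1)%:Z = m1 + \sum_(d < q) transl w ((s ^+ d)%g i1)
       %[mod (`|tcl w s i1|%N)%:Z])%Z.

Definition finite_set n (P : pt n -> Prop) : Prop :=
  exists s : seq (pt n), forall x, P x -> x \in s.

Definition almost_equal n (A B : pt n -> Prop) : Prop :=
  finite_set (fun x => (A x /\ ~ B x) \/ (B x /\ ~ A x)).

Definition aorbit n (a : pt n -> pt n) (x : pt n) : pt n -> Prop :=
  fun y => exists k : nat, iter k a x = y \/ iter k a y = x.

Definition sim_gen n w s (A B : {set 'I_n}) : Prop :=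
  exists i j : 'I_n, [/\ inI w s i, inI w s j, A = porbit s i, B = porbit s j &
    exists (x : pt n) (d e : nat), (0 < d)%N /\ (0 < e)%N /\
      almost_equal (aorbit (semi w s) x)
        (fun y => Xcl w s i d%:Z y \/ Xcl w s j e%:Z y)].

Definition sim n w s (i j : 'I_n) : Prop :=
  clos_refl_sym_trans {set 'I_n} (@sim_gen n w s) (porbit s i) (porbit s j).

(* Main.v *)
Require Import Defs.
From mathcomp Require Import all_boot all_order all_algebra all_fingroup.
From mathcomp Require Import zify.
From Stdlib Require Import ClassicalEpsilon Relations.
Import GRing.Theory Num.Theory.
Set Implicit Arguments. Unset Strict Implicit.
Local Open Scope ring_scope.

Lemma transl_spec n (f : pt n -> pt n) (hf : in_H f) (k : 'I_n) :
  ray_transl f k (transl f k).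
Proof.
rewrite /transl; apply: epsilon_spec; case: hf => _ /(_ k) //.
Qed.

Lemma ray_pt n (f : pt n -> pt n) (k : 'I_n) t z m :
  (forall m : nat, (z <= m)%N ->
    (f (k, m)).1 = k /\ ((f (k, m)).2)%:Z = (m%:Z + t)%R) ->
  (z <= m)%N -> exists m', f (k, m) = (k, m') /\ m'%:Z = (m%:Z + t)%R.
Proof.
move=> H /H [H1 H2]; exists (f (k, m)).2; split=> //.
by case: (f (k,m)) H1 => a b /= ->.
Qed.

Lemma transl_const n (w g : pt n -> pt n) (s : {perm 'I_n})
  (hw : in_H w) (hg : in_H g)
  (hcomm : forall x, semi w s (g x) = g (semi w s x)) (k : 'I_n) :
  transl g (s k) = transl g k.
Proof.
have [z1 H1] := transl_spec hw k.
have [z2 H2] := transl_spec hg k.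
have [z3 H3] := transl_spec hg (s k).
set tw := transl w k in H1 *; set tg := transl g k in H2 *;
set tg' := transl g (s k) in H3 *.
pose m := (z1 + z2 + z3 + `|tg| + `|tw|)%N.
have [m1 [e1 e1']] : exists m', g (k, m) = (k, m') /\ m'%:Z = (m%:Z + tg)%R.
  by apply: (ray_pt H2); rewrite /m; lia.
have [m2 [e2 e2']] : exists m', w (k, m1) = (k, m') /\ m'%:Z = (m1%:Z + tw)%R.
  by apply: (ray_pt H1); lia.
have [m3 [e3 e3']] : exists m', w (k, m) = (k, m') /\ m'%:Z = (m%:Z + tw)%R.
  by apply: (ray_pt H1); rewrite /m; lia.
have [m4 [e4 e4']] : exists m', g (s k, m3) = (s k, m') /\ m'%:Z = (m3%:Z + tg')%R.
  by apply: (ray_pt H3); lia.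
have := hcomm (k, m); rewrite /semi /sigma_act e1 /= e2 e3 /= e4.

case=> E; move: E e1' e2' e3' e4'; lia.
Qed.

Lemma transl_porbit n (w g : pt n -> pt n) (s : {perm 'I_n})
  (hw : in_H w) (hg : in_H g)
  (hcomm : forall x, semi w s (g x) = g (semi w s x)) (k i : 'I_n) :
  porbit s k = porbit s i -> transl g k = transl g i.
Proof.
move=> E; have : k \in porbit s i by rewrite -E porbit_id.
case/porbitP=> q ->; elim: q => [|q IH]; first by rewrite expg0 perm1.
by rewrite expgSr permM (transl_const hw hg hcomm).
Qed.

Lemma semi_inj n (w : pt n -> pt n) (s : {perm 'I_n}) (hw : in_H w) :
  injective (semi w s).
Proof.
case: hw => /bij_inj wi _ x y; rewrite /semi /sigma_act => -[/perm_inj E1 E2].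
apply: wi; move: E1 E2; case: (w x) => ? ?; case: (w y) => ? ? /= -> -> //.
Qed.

Lemma fix_iter n (w g : pt n -> pt n) (s : {perm 'I_n}) (hw : in_H w)
  (hcomm : forall x, semi w s (g x) = g (semi w s x)) k x :
  (g x = x) <-> (g (iter k (semi w s) x) = iter k (semi w s) x).
Proof.
elim: k => [|k IH] //=; rewrite IH -hcomm; split.
  by move=> ->.
by move/(semi_inj hw).
Qed.

Lemma fix_orbit n (w g : pt n -> pt n) (s : {perm 'I_n}) (hw : in_H w)
  (hcomm : forall x, semi w s (g x) = g (semi w s x)) x y :
  aorbit (semi w s) x y -> (g x = x <-> g y = y).
Proof.
case=> k [<-|<-]; first exact: fix_iter.
by have := fix_iter hw hcomm k y; tauto.
Qed.

Lemma find_pt n (w : pt n -> pt n) (s : {perm 'I_n}) (k : 'I_n) (d : nat)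
  (hk : inI w s k) (hd : (0 < d)%N) (N : nat) (L : seq (pt n)) :
  exists m : nat, [/\ (N <= m)%N, (k, m) \notin L & Xcl w s k d%:Z (k, m)].
Proof.
set M := `|tcl w s k|%N.
have M0 : (0 < M)%N by rewrite /M absz_gt0.
pose B := foldr (fun p b => maxn p.2.+1 b) 0%N L.
have HB : forall m, (B <= m)%N -> (k, m) \notin L.
  rewrite /B; clear B; elim: L => [|p L IH] m //=.
  rewrite geq_max in_cons => /andP[h1 h2]; rewrite negb_or IH // andbT.
  by apply/eqP => E; move: h1; rewrite -E /=; lia.
exists ((N + B) * M + d.-1)%N; split.
- by nia.
- by apply: HB; nia.
- exists 0%N; first by rewrite card_gt0; apply/set0Pn; exists k; exact: porbit_id.
  split; first by rewrite expg0 perm1.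
  rewrite big_ord0 addr0 /=.
  have -> : (((N + B) * M + d.-1).+1 = (N + B) * M + d)%N by lia.
  by rewrite !modz_nat modnMDl.
Qed.

Lemma edge n (w g : pt n -> pt n) (s : {perm 'I_n})
  (hw : in_H w) (hg : in_H g)
  (hcomm : forall x, semi w s (g x) = g (semi w s x)) (i j : 'I_n) (d e : nat)
  (hi : inI w s i) (hj : inI w s j) (hd : (0 < d)%N) (he : (0 < e)%N)
  x (L : seq (pt n))
  (HI : forall y, Xcl w s i d%:Z y -> y \notin L -> aorbit (semi w s) x y)
  (HJ : forall y, Xcl w s j e%:Z y -> y \notin L -> aorbit (semi w s) x y) :
  transl g i != 0 -> transl g j != 0.
Proof.
move=> ti; apply/negP => /eqP tj.
have [zj Hj] := transl_spec hg j.
have [zi Hi] := transl_spec hg i.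
have [m [m1 m2 m3]] := find_pt hj he zj L.
have [m' [m1' m2' m3']] := find_pt hi hd zi L.
have O := HJ _ m3 m2; have O' := HI _ m3' m2'.
have fy : g (j, m) = (j, m).
  have [p [E1 E2]] := ray_pt Hj m1; rewrite E1; congr pair; move: E2; rewrite tj; lia.
have fx := proj2 (fix_orbit hw hcomm O) fy.
have fy' := proj1 (fix_orbit hw hcomm O') fx.
have [p [E1 E2]] := ray_pt Hi m1'; move: fy'; rewrite E1 => -[E3].
move: ti; rewrite E3 in E2; move: E2; lia.
Qed.

Lemma edge' n (w g : pt n -> pt n) (s : {perm 'I_n})
  (hw : in_H w) (hg : in_H g)
  (hcomm : forall x, semi w s (g x) = g (semi w s x)) (i j : 'I_n) (d e : nat)
  (hi : inI w s i) (hj : inI w s j) (hd : (0 < d)%N) (he : (0 < e)%N) x :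
  almost_equal (aorbit (semi w s) x)
        (fun y => Xcl w s i d%:Z y \/ Xcl w s j e%:Z y) ->
  (transl g i != 0 <-> transl g j != 0).
Proof.
case=> L HL.
have H : forall y, (Xcl w s i d%:Z y \/ Xcl w s j e%:Z y) -> y \notin L ->
   aorbit (semi w s) x y.
  move=> y hy hL; case: (classic (aorbit (semi w s) x y)) => // no.
  by move: hL; rewrite HL //; right.
split; [apply: (edge hw hg hcomm hi hj hd he (x:=x) (L:=L)) |
  apply: (edge hw hg hcomm hj hi he hd (x:=x) (L:=L))]; move=> y hy; apply: H; tauto.
Qed.

Theorem lemma6p2 (n : nat) (hn : (2 <= n)%N)
  (w : pt n -> pt n) (s : {perm 'I_n}) (hw : in_H w)
  (g : pt n -> pt n) (hg : in_H g)
  (hcomm : forall x, semi w s (g x) = g (semi w s x))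
  (i : 'I_n) (hi : inI w s i) (hti : transl g i != 0) :
  forall j : 'I_n, inI w s j -> sim w s j i -> transl g j != 0.
Proof.
move=> j hj hs.
pose Q (A : {set 'I_n}) := forall k, porbit s k = A -> transl g k != 0.
suff : Q (porbit s j) by apply.
have QE : forall A B, sim_gen w s A B -> (Q A <-> Q B).
  move=> A B [i' [j' [hi' hj' -> -> [x [d [e [hd [he hae]]]]]]]].
  have H0 := edge' hw hg hcomm hi' hj' hd he hae.
  rewrite /Q; split=> H k hk.
    by rewrite (transl_porbit hw hg hcomm hk); apply/H0; apply: H.
  by rewrite (transl_porbit hw hg hcomm hk); apply/H0; apply: H.
have Qi : Q (porbit s i) by move=> k hk; rewrite (transl_porbit hw hg hcomm hk).
suff : Q (porbit s j) <-> Q (porbit s i) by tauto.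
elim: hs {Qi}.
- move=> x y h; exact: (QE _ _ h).
- by [].
- by move=> x y _ [h1 h2]; split.
- move=> x y z _ [a b] _ [c d]; split=> h; auto.
Qed.
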